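(* Consider an $m$-player episodic Markov game with finite state space $\mathcal{S}$ ($|\mathcal{S}|=S$), action sets $\mathcal{A}_1,\dots,\mathcal{A}_m$ with $|\mathcal{A}_j|=A_j$, and horizon $H$, and an offline dataset of size $n$ in which, for each $h\in[H]$, the state–joint-action pairs $(s_h^k,\mathbf{a}_h^k)$, $k=1,\dots,n$, are i.i.d. with law $d_h$, all dataset tuples being mutually independent. Let $p_{\min}=\min_{s,\mathbf{a},h}\{d_h(s,\mathbf{a}):d_h(s,\mathbf{a})>0\}$ and $\delta\in(0,1)$. If $n\geq \frac{8\log(S\prod_{j\in[m]}A_jH/\delta)}{p_{\min}}$, then with probability at least $1-\delta$, for every joint strategy $\pi$ we have $2C(\pi)\geq \widehat{C}(\pi)$.
   Context: A (Markov) joint strategy is $\pi=(\pi_1,\dots,\pi_m)$ with $\pi_{h,j}:\mathcal{S}\to\Delta(\mathcal{A}_j)$; players act independently. From a fixed initial state $s_1$, $d_h^{\pi}(s,\mathbf{a})$ denotes the probability that $(s_h,\mathbf{a}_h)=(s,\mathbf{a})$ under $\pi$. For a strategy $\pi'$ and player $j$, $(\pi'_j,\pi_{-j})$ denotes the joint strategy where player $j$ uses $\pi'_j$ and all others use $\pi$. Let $n_h(s,\mathbf{a})$ be the number of $k$ with $(s_h^k,\mathbf{a}_h^k)=(s,\mathbf{a})$ and $\widehat{d}_h(s,\mathbf{a})=n_h(s,\mathbf{a})/n$. The population unilateral coefficient is $C(\pi)=\max_{h,j,\pi',s,\mathbf{a}} d_h^{\pi'_j,\pi_{-j}}(s,\mathbf{a})/d_h(s,\mathbf{a})$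 and the empirical unilateral coefficient is $\widehat{C}(\pi)=\max_{h,j,\pi',s,\mathbf{a}} d_h^{\pi'_j,\pi_{-j}}(s,\mathbf{a})/\widehat{d}_h(s,\mathbf{a})$ (maxima over $h\in[H]$, $j\in[m]$, all strategies $\pi'$, $s\in\mathcal{S}$, joint actions $\mathbf{a}$; with conventions $0/0=0$ and $x/0=+\infty$ for $x>0$). *)

(* Defs.v *)
From HB Require Import structures.
From mathcomp Require Import all_boot all_order all_algebra.
From mathcomp Require Import all_classical all_reals all_analysis.
Set Implicit Arguments. Unset Strict Implicit. Unset Printing Implicit Defensive.
Import Order.TTheory GRing.Theory Num.Theory.
Local Open Scope ring_scope.

Section MarkovGame.
Variables (R : realType) (S : finType) (m : nat) (A : 'I_m -> finType).

Definition jact := {dffun forall j : 'I_m, A j}.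

(* A Markov joint strategy: pi j h s a = pi_{h,j}(a | s), steps h = 0,1,... *)
Definition strategy := forall j : 'I_m, nat -> S -> A j -> R.

Definition valid_strategy (pi : strategy) : Prop :=
  forall (j : 'I_m) (h : nat) (s : S),
    (forall a, 0 <= pi j h s a) /\ \sum_(a : A j) pi j h s a = 1.

Definition valid_kernel (P : nat -> S -> jact -> S -> R) : Prop :=
  forall h s a, (forall s', 0 <= P h s a s') /\ \sum_(s' : S) P h s a s' = 1.

Definition jprob (pi : strategy) (h : nat) (s : S) (a : jact) : R :=
  \prod_(j : 'I_m) pi j h s (a j).

(* state marginal mu_h^pi starting from fixed s1 (step 0 is the first step) *)
Fixpoint state_occ (P : nat -> S -> jact -> S -> R) (s1 : S) (pi : strategy)
  (h : nat) : S -> R :=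
  match h with
  | 0 => fun s => if s == s1 then 1 else 0
  | h'.+1 => fun s' => \sum_(s : S) \sum_(a : jact)
      state_occ P s1 pi h' s * jprob pi h' s a * P h' s a s'
  end.

Definition occ P s1 (pi : strategy) (h : nat) (s : S) (a : jact) : R :=
  state_occ P s1 pi h s * jprob pi h s a.

Definition deviate (pi pi' : strategy) (j : 'I_m) : strategy :=
  fun k => if k == j then pi' k else pi k.

Definition eratio (x y : R) : \bar R :=
  if 0 < y then (x / y)%:E else if x == 0 then 0%E else +oo%E.

Definition unilateral_coef (H : nat) P s1 (dd : 'I_H -> S -> jact -> R)
  (pi : strategy) : \bar R :=
  ereal_sup [set r | exists (h : 'I_H) (j : 'I_m) (pi' : strategy) (s : S) (a : jact),
      valid_strategy pi' /\ r = eratio (occ P s1 (deviate pi pi' j) h s a) (dd h s a)].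

Definition popC (H : nat) P s1 (d : 'I_H -> S -> jact -> R) (pi : strategy) :=
  unilateral_coef P s1 d pi.

(* offline dataset: D (h, k) = (s_h^k, a_h^k) *)
Definition dataset (H n : nat) := {ffun 'I_H * 'I_n -> S * jact}.

Definition count_sa (H n : nat) (D : dataset H n) (h : 'I_H) (s : S) (a : jact) : nat :=
  #|[set k : 'I_n | D (h, k) == (s, a)]|.

Definition dhat (H n : nat) (D : dataset H n) (h : 'I_H) (s : S) (a : jact) : R :=
  (count_sa D h s a)%:R / n%:R.

Definition empC (H n : nat) P s1 (D : dataset H n) (pi : strategy) :=
  unilateral_coef P s1 (dhat D) pi.

(* probability of the dataset D: all tuples independent, (s_h^k,a_h^k) ~ d_h *)
Definition data_weight (H n : nat) (d : 'I_H -> S -> jact -> R) (D : dataset H n) : R :=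
  \prod_(hk : 'I_H * 'I_n) d hk.1 (D hk).1 (D hk).2.

Definition data_prob (H n : nat) (d : 'I_H -> S -> jact -> R)
  (E : dataset H n -> Prop) : R :=
  \sum_(D : dataset H n | `[< E D >]) data_weight d D.

(* p_min = min { d_h(s,a) : d_h(s,a) > 0 } (all values are <= 1, so 1 is a
   neutral default for the nonempty minimum) *)
Definition pmin (H : nat) (d : 'I_H -> S -> jact -> R) : R :=
  \big[Num.min/1]_(h : 'I_H) \big[Num.min/1]_(s : S)
     \big[Num.min/1]_(a : jact | 0 < d h s a) d h s a.

Definition valid_data_dist (H : nat) (d : 'I_H -> S -> jact -> R) : Prop :=
  forall h, (forall s a, 0 <= d h s a) /\ \sum_(s : S) \sum_(a : jact) d h s a = 1.

End MarkovGame.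

(* Main.v *)
Require Import Defs.
From HB Require Import structures.
From mathcomp Require Import all_boot all_order all_algebra.
From mathcomp Require Import all_classical all_reals all_analysis.
From mathcomp Require Import ring lra zify.
Import Order.TTheory GRing.Theory Num.Theory.
Local Open Scope ring_scope.


Lemma total_mass (R : realType) (S : finType) m (A : 'I_m -> finType) H n (d : 'I_H -> S -> jact A -> R) : valid_data_dist d ->
  \sum_(D : dataset S A H n) data_weight d D = 1.
Proof.
move=> vd.
rewrite /data_weight.
rewrite -(bigA_distr_bigA (fun hk (x : S * jact A) => d hk.1 x.1 x.2)) /=.
apply: big1 => hk _.
by rewrite -(pair_bigA _ (fun s a => d hk.1 s a)) (proj2 (vd hk.1)).
Qed.
Lemma q58 (R : realType) : expR (- (1/2)) <= 5/8 :> R.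
Proof.
have e1 : 1 + 1/8 <= expR (1/8) :> R by apply: expR_ge1Dx.
have e2 : (1 + 1/8)^+4 <= expR (1/8)^+4 :> R.
  by apply: lerXn2r => //; rewrite ?nnegrE; [lra| apply: ltW; apply: expR_gt0].
rewrite -expRM_natl in e2.
have h4 : 4%:R * (1/8) = 1/2 :> R by lra.
rewrite h4 in e2.
rewrite expRN.
have p : 0 < expR (1/2) :> R by apply: expR_gt0.
rewrite invf_ple ?posrE //.
have -> : (5/8)^-1 = 8/5 :> R by field.
apply: le_trans e2.
rewrite !exprS expr0. lra.
Qed.
Lemma count_exp (R : realType) (S : finType) m (A : 'I_m -> finType) H n
  (D : dataset S A H n) h0 s a (q : R) :
  \prod_(hk : 'I_H * 'I_n) (if (hk.1 == h0) && (D hk == (s,a)) then q else 1)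
  = q ^+ count_sa D h0 s a.
Proof.
transitivity (\prod_h \prod_k (if (h == h0) && (D (h,k) == (s,a)) then q else 1)).
  by rewrite pair_bigA; apply: eq_bigr => -[h k].
rewrite (bigD1 h0) //= [X in _ * X]big1 ?mulr1; last first.
  by move=> h /negbTE hn; apply: big1 => k _; rewrite hn.
rewrite eqxx -big_mkcond prodr_const /count_sa cardsE.
by [].
Qed.

Lemma prod_h0 (R : realType) H n (h0 : 'I_H) (r : R) :
  \prod_(hk : 'I_H * 'I_n) (if hk.1 == h0 then r else 1) = r ^+ n.
Proof.
transitivity (\prod_h \prod_(k : 'I_n) (if h == h0 then r else 1)).
  by rewrite pair_bigA; apply: eq_bigr => -[h k].
rewrite (bigD1 h0) //= [X in _ * X]big1 ?mulr1; last first.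
  by move=> h /negbTE hn; apply: big1 => k _; rewrite hn.
by rewrite eqxx prodr_const card_ord.
Qed.

Lemma factor_g (R : realType) (S : finType) m (A : 'I_m -> finType) H n
  (d : 'I_H -> S -> jact A -> R) (g : 'I_H * 'I_n -> S * jact A -> R) :
  \sum_(D : dataset S A H n) data_weight d D * \prod_hk g hk (D hk)
  = \prod_hk \sum_(x : S * jact A) d hk.1 x.1 x.2 * g hk x.
Proof.
rewrite (bigA_distr_bigA (fun hk (x : S * jact A) => d hk.1 x.1 x.2 * g hk x)).
by apply: eq_bigr => D _; rewrite /data_weight -big_split.
Qed.

Lemma weight_ge0 (R : realType) (S : finType) m (A : 'I_m -> finType) H n
  (d : 'I_H -> S -> jact A -> R) (D : dataset S A H n) :
  valid_data_dist d -> 0 <= data_weight d D.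
Proof. by move=> vd; apply: prodr_ge0 => hk _; apply: (proj1 (vd _)). Qed.

Lemma chernoff_low (R : realType) (S : finType) m (A : 'I_m -> finType) H n
  (d : 'I_H -> S -> jact A -> R) h0 s a :
  valid_data_dist d -> 0 <= d h0 s a ->
  \sum_(D : dataset S A H n)
     (if (count_sa D h0 s a)%:R < n%:R * d h0 s a / 2 then data_weight d D else 0)
  <= expR (- (n%:R * d h0 s a) / 8).
Proof.
move=> vd p0.
set p := d h0 s a.
set q : R := expR (- (1/2)).
pose g (hk : 'I_H * 'I_n) (x : S * jact A) := if (hk.1 == h0) && (x == (s,a)) then q else 1.
apply: (@le_trans _ _ (\sum_(D : dataset S A H n)
   data_weight d D * (expR (n%:R * p / 4) * \prod_hk g hk (D hk)))).
  apply: ler_sum => D _.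
  have W0 : 0 <= data_weight d D by apply: weight_ge0.
  have gp : 0 <= \prod_hk g hk (D hk).
    by apply: prodr_ge0 => hk _; rewrite /g; case: ifP => _ //; apply: ltW; apply: expR_gt0.
  case: ifP => Hc; last by apply: mulr_ge0 => //; apply: mulr_ge0 => //; apply: ltW; apply: expR_gt0.
  rewrite -[X in X <= _]mulr1; apply: ler_wpM2l => //.
  rewrite /g count_exp /q -expRM_natl -expRD.
  apply: le_trans (expR_ge1Dx _).
  rewrite lerDl. lra.
rewrite (eq_bigr (fun D => expR (n%:R * p / 4) * (data_weight d D * \prod_hk g hk (D hk)))); last first.
  by move=> D _; rewrite mulrCA.
rewrite -mulr_sumr factor_g.
set r := 1 + p * (q - 1).
have gr : forall hk : 'I_H * 'I_n, \sum_(x : S * jact A) d hk.1 x.1 x.2 * g hk x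
    = if hk.1 == h0 then r else 1.
  move=> hk; rewrite /g; case: eqP => [-> | _] /=.
    rewrite (bigD1 (s,a)) //= eqxx.
    rewrite (eq_bigr (fun x => d h0 x.1 x.2)); last first.
      by move=> x /negbTE ->; rewrite mulr1.
    have := proj2 (vd h0).
    rewrite (pair_bigA _ (fun s a => d h0 s a)) (bigD1 (s,a)) //= -/p => tot.
    rewrite /r; lra.
  rewrite (eq_bigr (fun x => d hk.1 x.1 x.2)); last by move=> x _; rewrite mulr1.
  by rewrite -(pair_bigA _ (fun s a => d hk.1 s a)) (proj2 (vd hk.1)).
have r0 : 0 <= r.
  have := proj2 (vd h0).
  rewrite (pair_bigA _ (fun s a => d h0 s a)) (bigD1 (s,a)) //= -/p => tot.
  have : 0 <= \sum_(i | i != (s, a)) d h0 i.1 i.2.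
    by apply: sumr_ge0 => i _; apply: (proj1 (vd h0)).
  have q0 : 0 <= q by apply: ltW; apply: expR_gt0.
  have pq0 : 0 <= p * q by apply: mulr_ge0.
  rewrite /r; lra.
rewrite (eq_bigr _ (fun hk _ => gr hk)) prod_h0.
have rle : r ^+ n <= expR (n%:R * (p * (q - 1))).
  rewrite expRM_natl; apply: lerXn2r; rewrite ?nnegrE //; apply: expR_ge1Dx.
apply: le_trans (ler_wpM2l _ rle) _; first by apply: ltW; apply: expR_gt0.
rewrite -expRD ler_expR.
have := q58 R; rewrite -/q => q5.
have np0 : 0 <= n%:R * p by apply: mulr_ge0.
have : n%:R * p * (q - 5/8) <= 0 by apply: mulr_ge0_le0 => //; lra.
lra.
Qed.

Lemma state_occ_ge0 (R : realType) (S : finType) m (A : 'I_m -> finType)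
  (P : nat -> S -> jact A -> S -> R) s1 (pi : strategy R S A) h s :
  valid_kernel P -> valid_strategy pi -> 0 <= state_occ P s1 pi h s.
Proof.
move=> vP vpi; elim: h s => [|h IH] s /=; first by case: ifP.
apply: sumr_ge0 => s0 _; apply: sumr_ge0 => a _.
apply: mulr_ge0; last by apply: (proj1 (vP _ _ _)).
apply: mulr_ge0 => //; apply: prodr_ge0 => j _; apply: (proj1 (vpi _ _ _)).
Qed.

Lemma occ_ge0 (R : realType) (S : finType) m (A : 'I_m -> finType)
  (P : nat -> S -> jact A -> S -> R) s1 (pi : strategy R S A) h s a :
  valid_kernel P -> valid_strategy pi -> 0 <= occ P s1 pi h s a.
Proof.
move=> vP vpi; apply: mulr_ge0; first exact: state_occ_ge0.
by apply: prodr_ge0 => j _; apply: (proj1 (vpi _ _ _)).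
Qed.

Lemma deviate_valid (R : realType) (S : finType) m (A : 'I_m -> finType)
  (pi pi' : strategy R S A) j :
  valid_strategy pi -> valid_strategy pi' -> valid_strategy (deviate pi pi' j).
Proof. by move=> v v' k h s; rewrite /deviate; case: (k == j). Qed.

Lemma eratio_le (R : realType) (x y yh : R) :
  0 <= x -> 0 <= y -> (0 < y -> y / 2 <= yh) -> (y = 0 -> yh = 0) ->
  (eratio x yh <= 2%:E * eratio x y)%E.
Proof.
move=> x0 y0 h1 h2; rewrite /eratio.
case: (ltP 0 y) => yp.
  have yhp : 0 < yh by apply: lt_le_trans (h1 yp); lra.
  rewrite yhp -EFinM lee_fin.
  have : x / yh <= x / (y/2).
    by apply: ler_wpM2l => //; rewrite lef_pV2 ?posrE //; [apply: h1 | lra].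
  have -> : x / (y/2) = 2 * (x / y) by field; lra.
  by [].
have y00 : y = 0 by apply/eqP; rewrite eq_le yp y0.
rewrite h2 // ltxx.
case: (x == 0); first by rewrite mule0.
by rewrite gt0_muley // lte_fin.
Qed.
Lemma cardJ m (A : 'I_m -> finType) : #|jact A| = (\prod_(j : 'I_m) #|A j|)%N.
Proof.
rewrite /jact card_dep_ffun foldrE big_map big_enum /=.
by apply: eq_bigl => j.
Qed.
Lemma pm (R : realType) (S : finType) m (A : 'I_m -> finType) H (d : 'I_H -> S -> jact A -> R) :
  0 < pmin d /\ (forall h s a, 0 < d h s a -> pmin d <= d h s a).
Proof.
have mpos : forall x y : R, 0 < x -> 0 < y -> 0 < Num.min x y.
  by move=> x y hx hy; rewrite lt_min hx hy.
split.
  apply: (big_ind (fun x => 0 < x)) => // h _.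
  apply: (big_ind (fun x => 0 < x)) => // s _.
  by apply: (big_ind (fun x => 0 < x)) => // a.
move=> h s a dp; rewrite /pmin.
apply: le_trans (bigmin_le _ h _) _.
apply: le_trans (bigmin_le _ s _) _.
exact: bigmin_le_cond.
Qed.

Lemma emp_le (R : realType) (S : finType) m (A : 'I_m -> finType) H n
  (P : nat -> S -> jact A -> S -> R) s1 (d : 'I_H -> S -> jact A -> R)
  (D : dataset S A H n) (pi : strategy R S A) :
  valid_kernel P -> valid_strategy pi -> valid_data_dist d ->
  (forall h s a, (0 < d h s a -> d h s a / 2 <= dhat R D h s a) /\
                 (d h s a = 0 -> dhat R D h s a = 0)) ->
  (empC P s1 D pi <= 2%:E * popC P s1 d pi)%E.
Proof.
move=> vP vpi vd hd.
rewrite /empC /popC /unilateral_coef.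
apply: ge_ereal_sup => r [h [j [pi' [s [a [vpi' ->]]]]]].
have o0 : 0 <= occ P s1 (deviate pi pi' j) h s a.
  by apply: occ_ge0 => //; apply: deviate_valid.
have hr := @eratio_le R (occ P s1 (deviate pi pi' j) h s a) (d h s a) (dhat R D h s a)
  o0
  (proj1 (vd h) s a) (proj1 (hd h s a)) (proj2 (hd h s a)).
apply: le_trans hr _.
apply: lee_wpmul2l; first by rewrite lee_fin.
apply: ereal_sup_ubound.
by exists h, j, pi', s, a.
Qed.

Definition badt (R : realType) (S : finType) m (A : 'I_m -> finType) H n
  (d : 'I_H -> S -> jact A -> R) (D : dataset S A H n) (t : 'I_H * (S * jact A)) :=
  (0 < d t.1 t.2.1 t.2.2) &&
  ((count_sa D t.1 t.2.1 t.2.2)%:R < n%:R * d t.1 t.2.1 t.2.2 / 2).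
Arguments badt {R S m A H n}.

Lemma pointwise (R : realType) (S : finType) m (A : 'I_m -> finType) H n
  (P : nat -> S -> jact A -> S -> R) s1 (d : 'I_H -> S -> jact A -> R)
  (D : dataset S A H n) :
  valid_kernel P -> valid_data_dist d ->
  ((0 < n)%N \/ (H * (#|S| * #|jact A|))%N = 0%N) ->
  data_weight d D - \sum_(t : 'I_H * (S * jact A))
       (if badt d D t then data_weight d D else 0)
  <= (if `[< forall pi : strategy R S A, valid_strategy pi ->
      (empC P s1 D pi <= 2%:E * popC P s1 d pi)%E >] then data_weight d D else 0).
Proof.
move=> vP vd npos.
set W := data_weight d D.
have W0 : 0 <= W by apply: weight_ge0.
have S0 : 0 <= \sum_(t : 'I_H * (S * jact A)) (if badt d D t then W else 0).
  by apply: sumr_ge0 => t _; case: ifP.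
case: asboolP => HE; first lra.
have [Wz|Wnz] := eqVneq W 0; first lra.
case: (boolP [exists t, badt d D t]) => [/existsP [t bt] | /existsPn nb].
  rewrite (bigD1 t) //= bt.
  have : 0 <= \sum_(i | i != t) (if badt d D i then W else 0).
    by apply: sumr_ge0 => i _; case: ifP.
  lra.
exfalso; apply: HE => pi vpi.
apply: emp_le => // h s a.
have fpos : forall hk, d hk.1 (D hk).1 (D hk).2 != 0.
  move=> hk; apply/negP => /eqP hz; move/eqP: Wnz; apply.
  by apply/eqP/prodf_eq0; exists hk => //; rewrite hz.
split.
  move=> dp.
  have := nb (h, (s, a)); rewrite /badt /= dp /= -leNgt => cnt.
  have n0 : (0 < n)%N.
    case: npos => // HN; exfalso.
    have c1 : (0 < #|S|)%N by apply/card_gt0P; exists s.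
    have c2 : (0 < #|jact A|)%N by apply/card_gt0P; exists a.
    have c3 : (0 < H)%N by exact: (leq_ltn_trans (leq0n h) (ltn_ord h)).
    have : (0 < H * (#|S| * #|jact A|))%N by rewrite !muln_gt0 c1 c2 c3.
    by rewrite HN.
  rewrite /dhat ler_pdivlMr ?ltr0n //.
  lra.
move=> dz; rewrite /dhat /count_sa.
have -> : #|[set k : 'I_n | D (h, k) == (s, a)]| = 0%N.
  apply: eq_card0 => k; rewrite !inE; apply/negbTE/negP => /eqP HD.
  by have := fpos (h, k); rewrite HD /= dz eqxx.
by rewrite mul0r.
Qed.

Theorem proposition1 (R : realType) (S : finType) (m : nat) (A : 'I_m -> finType)
  (H n : nat) (P : nat -> S -> jact A -> S -> R) (s1 : S)
  (d : 'I_H -> S -> jact A -> R) (delta : R) :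
  valid_kernel P ->
  valid_data_dist d ->
  0 < delta < 1 ->
  8 * ln ((#|S| * (\prod_(j : 'I_m) #|A j|) * H)%:R / delta) / pmin d <= n%:R ->
  1 - delta <= data_prob d (fun D : dataset S A H n =>
    forall pi : strategy R S A, valid_strategy pi ->
      (empC P s1 D pi <= 2%:E * popC P s1 d pi)%E).
Proof.
move=> vP vd /andP [d0 d1] hyp.
have [pm0 pmle] := pm _ _ _ _ _ d.
set N := (#|S| * (\prod_(j : 'I_m) #|A j|) * H)%N in hyp.
have NJ : (H * (#|S| * #|jact A|))%N = N by rewrite cardJ /N mulnC.
have key : N%:R * expR (- (n%:R * pmin d) / 8) <= delta.
  have [N0|Nn0] := eqVneq N 0%N; first by rewrite N0 mul0r; apply: ltW.
  have Np : 0 < N%:R :> R by rewrite ltr0n lt0n.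
  have Nd : 0 < N%:R / delta by apply: divr_gt0.
  have h1 : 8 * ln (N%:R / delta) <= n%:R * pmin d by rewrite -ler_pdivrMr.
  have h2 : N%:R / delta <= expR (n%:R * pmin d / 8).
    by rewrite -[X in X <= _](lnK Nd) ler_expR; lra.
  rewrite ler_pdivrMr // in h2.
  rewrite mulNr expRN -/(_ / _) ler_pdivrMr ?expR_gt0 //.
  by rewrite mulrC.
have npos : (0 < n)%N \/ (H * (#|S| * #|jact A|))%N = 0%N.
  case: (posnP n) => [n0|]; last by left.
  right; rewrite NJ; have [//|Nn0] := eqVneq N 0%N; exfalso.
  have Ng1 : 1 <= N%:R :> R by rewrite ler1n lt0n.
  have : 1 < N%:R / delta by rewrite ltr_pdivlMr //; lra.
  move/ln_gt0 => lp.
  move: hyp; rewrite n0 mulr0n => hyp.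
  have : 0 < 8 * ln (N%:R / delta) / pmin d by apply: divr_gt0 => //; lra.
  lra.
rewrite /data_prob big_mkcond /=.
apply: le_trans (ler_sum _ (fun D _ => @pointwise R S m A H n P s1 d D vP vd npos)).
rewrite sumrB total_mass // exchange_big /=.
suff : \sum_(t : 'I_H * (S * jact A)) \sum_(D : dataset S A H n)
   (if badt d D t then data_weight d D else 0) <= delta by lra.
apply: le_trans key.
apply: (@le_trans _ _ (\sum_(t : 'I_H * (S * jact A)) expR (- (n%:R * pmin d) / 8))).
  apply: ler_sum => -[h [s a]] _.
  case: (ltP 0 (d h s a)) => dp.
    rewrite /badt /= dp /=.
    apply: le_trans (@chernoff_low R S m A H n d h s a vd (ltW dp)) _.
    rewrite ler_expR.
    have : n%:R * pmin d <= n%:R * d h s a by apply: ler_wpM2l => //; apply: pmle.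
    lra.
  rewrite big1; first by apply: ltW; apply: expR_gt0.
  by move=> D _; rewrite /badt /= ltNge dp.
rewrite sumr_const !card_prod !card_ord -[X in _ *+ X]/(H * (#|S| * #|jact A|))%N NJ.
set e := expR _; by rewrite mulr_natl.
Qed.
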